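(* Let $H$ be a fixed graph with $k=|V(H)|$ vertices and let $p\in[0,1)$. Then the algorithm $\mathrm{ALG}_p$ for the Delayed $H$-Node-Deletion Problem with predictions is $\bigl(k-p(k-1),\; k+\tfrac{p}{1-p}\bigr)$-competitive; that is, its consistency is at most $k-p(k-1)$ and its robustness is at most $k+p/(1-p)$.
   Context: All graphs are finite, simple and undirected. An induced copy of $H$ in $G$ is an induced subgraph isomorphic to $H$; $G$ is $H$-free if it has none. For $S\subseteq V(G)$, $G-S=G[V(G)\setminus S]$. An online graph $G$ has vertices $v_1,\dots,v_n$ revealed one at a time (with edges to earlier vertices); $G_t=G[\{v_1,\dots,v_t\}]$. Delayed $H$-Node-Deletion Problem: an online algorithm must choose sets $S_1\subseteq S_2\subseteq\dots\subseteq S_n$ with $S_t\subseteq V(G_t)$ such that $G_t-S_t$ is $H$-free for all $t$, where $S_t$ may depend only on $G_t$ (and, with predictions, on $u_1(G),\dots,u_t(G)$). The cost is $|S_n|$. $\mathrm{OPT}(G)$ denotes the minimum size of a set $S\subseteq V(G)$ with $G-S$ $H$-free. Predictions: when $v_t$ is revealed, the algorithm receives a bit $u_t(G)\in\{0,1\}$. The advice is correct if the set of vertices with bit $1$ is a minimum-size set $S$ with $G-S$ $H$-free. An algorithm is $(r,w)$-competitive if there is a constant $\alpha\ge 0$ such that for every online graph $G$: (i) for some correct advice, its cost is at most $r\cdot\mathrm{OPT}(G)+\alpha$, and (ii) for every advice sequence (correct or not), its cost is at most $w\cdot\mathrm{OPT}(G)+\alpha$. The consistency (resp. robustness) is the infimum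 of such $r$ (resp. $w$). Algorithm $\mathrm{ALG}_p$: it maintains counters $d$ and $e$, initially $0$. Deleted vertices are removed permanently. After each vertex is revealed, as long as the remaining graph contains an induced copy of $H$, it picks one such copy (arbitrarily) and applies the first applicable case: (Case 1) If the copy contains no vertex with advice bit $1$ (or such a copy has appeared at some earlier point), then from now on the algorithm deletes all vertices of every copy of $H$ that appears, without changing $d$ or $e$. (Case 2) Else, if $d=0$ or $e/(e+d)>p$: delete all $k$ vertices of the copy and increase $d$ by $1$. (Case 3) Else: delete one vertex of the copy with advice bit $1$ (the earliest-revealed such vertex) and increase $e$ by $1$. This is repeated until the remaining graph is $H$-free before the next vertex is revealed. *)

(* Defs.v *)
From HB Require Import structures.
From mathcomp Require Import all_boot all_order all_algebra.
From mathcomp Require Import reals.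

Set Implicit Arguments.
Unset Strict Implicit.
Unset Printing Implicit Defensive.

Import Order.TTheory GRing.Theory Num.Theory.
Local Open Scope ring_scope.

(* Conventions.
   - The pattern graph H has vertex set 'I_k with adjacency eH (symmetric,
     irreflexive).
   - An online graph G on n vertices has vertex set 'I_n with adjacency adj
     (symmetric, irreflexive); vertex v_(i+1) of the paper is the ordinal i,
     i.e. vertices are revealed in the order 0, 1, ..., n-1, and
     G_t is the subgraph induced by [set v | v < t]. *)

Definition is_copy (k n : nat) (eH : rel 'I_k) (adj : rel 'I_n)
    (X : {set 'I_n}) (f : 'I_k -> 'I_n) : bool :=
  [&& injectiveb f, [forall i, f i \in X] &
      [forall i, forall j, (i != j) ==> (adj (f i) (f j) == eH i j)]].

Definition H_free (k n : nat) (eH : rel 'I_k) (adj : rel 'I_n)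
    (X : {set 'I_n}) : Prop :=
  forall f : 'I_k -> 'I_n, ~~ is_copy eH adj X f.

Definition copy_set (k n : nat) (f : 'I_k -> 'I_n) : {set 'I_n} :=
  [set f i | i : 'I_k].

Definition hitting (k n : nat) (eH : rel 'I_k) (adj : rel 'I_n)
    (S : {set 'I_n}) : Prop :=
  H_free eH adj (~: S).

Definition is_OPT (k n : nat) (eH : rel 'I_k) (adj : rel 'I_n) (m : nat) : Prop :=
  (exists S, hitting eH adj S /\ #|S| = m) /\
  (forall S, hitting eH adj S -> (m <= #|S|)%N).

Definition correct_advice (k n : nat) (eH : rel 'I_k) (adj : rel 'I_n)
    (u : 'I_n -> bool) : Prop :=
  hitting eH adj [set v | u v] /\
  (forall S, hitting eH adj S -> (#|[set v | u v]| <= #|S|)%N).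

(* State of ALG_p: deleted set, counters d and e, and whether Case 1 has
   been triggered ("from now on delete every copy entirely"). *)
Record alg_state (n : nat) := AlgState {
  del : {set 'I_n};
  dcnt : nat;
  ecnt : nat;
  mode : bool }.

Definition revealed (n t : nat) : {set 'I_n} := [set v : 'I_n | (v < t)%N].

Definition avail (n t : nat) (s : alg_state n) : {set 'I_n} :=
  revealed n t :\: del s.

Definition is_earliest_one (n : nat) (u : 'I_n -> bool) (C : {set 'I_n})
    (v : 'I_n) : Prop :=
  [/\ v \in C, u v & forall w, w \in C -> u w -> (v <= w)%N].

Inductive alg_step (R : realType) (k n : nat) (eH : rel 'I_k) (adj : rel 'I_n)
    (p : R) (u : 'I_n -> bool) (t : nat) : alg_state n -> alg_state n -> Prop :=
| AlgCase1 (s : alg_state n) (f : 'I_k -> 'I_n) :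
    is_copy eH adj (avail t s) f ->
    mode s || [forall i, ~~ u (f i)] ->
    alg_step eH adj p u t s
      (AlgState (del s :|: copy_set f) (dcnt s) (ecnt s) true)
| AlgCase2 (s : alg_state n) (f : 'I_k -> 'I_n) :
    is_copy eH adj (avail t s) f ->
    ~~ mode s -> [exists i, u (f i)] ->
    (dcnt s = 0%N \/ p < (ecnt s)%:R / (ecnt s + dcnt s)%:R) ->
    alg_step eH adj p u t s
      (AlgState (del s :|: copy_set f) (dcnt s).+1 (ecnt s) (mode s))
| AlgCase3 (s : alg_state n) (f : 'I_k -> 'I_n) (v : 'I_n) :
    is_copy eH adj (avail t s) f ->
    ~~ mode s -> [exists i, u (f i)] ->
    dcnt s <> 0%N -> (ecnt s)%:R / (ecnt s + dcnt s)%:R <= p ->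
    is_earliest_one u (copy_set f) v ->
    alg_step eH adj p u t s
      (AlgState (v |: del s) (dcnt s) (ecnt s).+1 (mode s)).

Inductive alg_process (R : realType) (k n : nat) (eH : rel 'I_k)
    (adj : rel 'I_n) (p : R) (u : 'I_n -> bool) (t : nat)
    : alg_state n -> alg_state n -> Prop :=
| ProcDone (s : alg_state n) :
    H_free eH adj (avail t s) -> alg_process eH adj p u t s s
| ProcStep (s s' s'' : alg_state n) :
    alg_step eH adj p u t s s' -> alg_process eH adj p u t s' s'' ->
    alg_process eH adj p u t s s''.

(* alg_run t s : s is a possible state of ALG_p after the first t vertices
   have been revealed and processed (over all arbitrary choices of copies). *)
Inductive alg_run (R : realType) (k n : nat) (eH : rel 'I_k) (adj : rel 'I_n)
    (p : R) (u : 'I_n -> bool) : nat -> alg_state n -> Prop :=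
| Run0 : alg_run eH adj p u 0 (AlgState set0 0 0 false)
| RunS (t : nat) (s s' : alg_state n) :
    (t < n)%N -> alg_run eH adj p u t s ->
    alg_process eH adj p u t.+1 s s' -> alg_run eH adj p u t.+1 s'.

(* ALG_p is (r,w)-competitive (for every possible run, i.e. every choice of
   copies); the cost of a run is |S_n| = #|del s| after all n vertices. *)
Definition ALG_competitive (R : realType) (k : nat) (eH : rel 'I_k)
    (p r w : R) : Prop :=
  exists alpha : R, 0 <= alpha /\
  forall (n : nat) (adj : rel 'I_n), symmetric adj -> irreflexive adj ->
  forall opt : nat, is_OPT eH adj opt ->
    (exists u : 'I_n -> bool, correct_advice eH adj u /\
       forall s, alg_run eH adj p u n s ->
         (#|del s|)%:R <= r * opt%:R + alpha) /\
    (forall (u : 'I_n -> bool) s, alg_run eH adj p u n s ->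
         (#|del s|)%:R <= w * opt%:R + alpha).

(* Main.v *)
Require Import Defs.
From HB Require Import structures.
From mathcomp Require Import all_boot all_order all_algebra.
From mathcomp Require Import reals.
From mathcomp Require Import zify ring lra.
Import Order.TTheory GRing.Theory Num.Theory.
Local Open Scope ring_scope.
Set Implicit Arguments. Unset Strict Implicit.

Section Helpers.
Variables (k n : nat) (eH : rel 'I_k) (adj : rel 'I_n).

Lemma copy_in X f i : is_copy eH adj X f -> f i \in X.
Proof. by case/and3P=> _ /forallP H _; exact: H. Qed.

Lemma copy_hit S X f : hitting eH adj S -> is_copy eH adj X f ->
  exists i, f i \in S.
Proof.
move=> hS /and3P[h1 h2 h3].
case: (pickP (fun i => f i \in S)) => [i Hi|H0]; first by exists i.
exfalso; move: (hS f); rewrite /is_copy h1 h3 andbT /=.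
move/negP; apply; apply/forallP=> i; by rewrite in_setC H0.
Qed.

Lemma card_copy (f : 'I_k -> 'I_n) : (#|copy_set f| <= k)%N.
Proof. by rewrite /copy_set (leq_trans (leq_imset_card _ _)) // card_ord. Qed.

Lemma incr (A C S : {set 'I_n}) w : w \in C -> w \in S -> w \notin A ->
  (#|A :&: S|.+1 <= #|(A :|: C) :&: S|)%N.
Proof.
move=> wC wS wA.
have -> : (#|A :&: S|.+1 = #|w |: (A :&: S)|)%N by rewrite cardsU1 inE (negbTE wA).
apply: subset_leq_card; apply/subsetP=> x; rewrite !inE.
case/orP=> [/eqP->|/andP[-> ->]]; by rewrite ?wC ?wS ?orbT.
Qed.

Lemma sub_card (A B S : {set 'I_n}) : A \subset B ->
  (#|A :&: S| <= #|B :&: S|)%N.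
Proof. by move=> h; apply: subset_leq_card; apply: setSI. Qed.

End Helpers.


Section Inv.
Variables (R : realType) (k n : nat) (eH : rel 'I_k) (adj : rel 'I_n) (p : R).
Hypotheses (p0 : 0 <= p) (p1 : p < 1).

Definition invR (S : {set 'I_n}) (s : alg_state n) :=
  exists c : nat, [/\ (#|del s| <= k*c + ecnt s)%N, (c <= #|del s :&: S|)%N,
     (dcnt s <= c)%N & (1-p)*(ecnt s)%:R <= p*(dcnt s)%:R + (1-p)].

Lemma step_invR S u t s s' : hitting eH adj S ->
  alg_step eH adj p u t s s' -> invR S s -> invR S s'.
Proof.
move=> hS; case=> {s s'} [s f cf _|s f cf _ _ _|s f v cf _ _ dn0 hle [vC uv _]];
  case=> c [h1 h2 h3 h4] /=.
- have [i Hi] := copy_hit hS cf.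
  have fa := copy_in i cf; rewrite inE in fa; case/andP: fa => fd _.
  exists c.+1; split => //.
  + have hU : (#|del s :|: copy_set f| <= #|del s| + #|copy_set f|)%N.
      by rewrite cardsU leq_subr.
    have hc := card_copy f; rewrite mulnS /=.
    apply: (leq_trans hU); apply: (leq_trans (leq_add h1 hc)); lia.
  + by rewrite (leq_trans _ (incr _ Hi fd)) // /copy_set imset_f.
  + simpl; lia.
- have [i Hi] := copy_hit hS cf.
  have fa := copy_in i cf; rewrite inE in fa; case/andP: fa => fd _.
  exists c.+1; split => //.
  + have hU : (#|del s :|: copy_set f| <= #|del s| + #|copy_set f|)%N.
      by rewrite cardsU leq_subr.
    have hc := card_copy f; rewrite mulnS /=.
    apply: (leq_trans hU); apply: (leq_trans (leq_add h1 hc)); lia.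
  + by rewrite (leq_trans _ (incr _ Hi fd)) // /copy_set imset_f.
  + have := p0; rewrite /= -natr1 mulrDr; lra.
- exists c; split => //.
  + rewrite /= cardsU1; move: h1; set a := #|del s| => h1; case: (v \notin del s) => /=; lia.
  + by apply: (leq_trans h2); apply: sub_card; apply: subsetUr.
  + have dpos : (0 < (ecnt s + dcnt s)%:R :> R) by rewrite ltr0n; lia.
    rewrite ler_pdivrMr // in hle.
    rewrite natrD in hle.
    rewrite /= -natr1; lra.
Qed.
End Inv.

Section Inv2.
Variables (R : realType) (k n : nat) (eH : rel 'I_k) (adj : rel 'I_n) (p : R).
Hypotheses (p0 : 0 <= p) (p1 : p < 1).

Lemma run_inv (P : alg_state n -> Prop) u :
  P (AlgState set0 0 0 false) ->
  (forall t s s', alg_step eH adj p u t s s' -> P s -> P s') ->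
  forall t s, alg_run eH adj p u t s -> P s.
Proof.
move=> P0 Pst t s; elim=> // t' s0 s1 _ _ IH pr.
elim: pr IH => // a b c st _ IH2 Pa; apply: IH2; exact: Pst st Pa.
Qed.

Definition invC (U : {set 'I_n}) (s : alg_state n) :=
  [/\ (#|del s| <= k * dcnt s + ecnt s)%N, (dcnt s + ecnt s <= #|del s :&: U|)%N,
      mode s = false & (dcnt s)%:R <= (1-p)*(dcnt s + ecnt s)%:R + 1].

Lemma step_invC u t s s' : hitting eH adj [set v | u v] ->
  alg_step eH adj p u t s s' -> invC [set v | u v] s -> invC [set v | u v] s'.
Proof.
move=> hS; case=> {s s'} [s f cf hm|s f cf _ _ hc|s f v cf _ _ dn0 hle [vC uv _]];
  case=> h1 h2 h3 h4 /=.
- exfalso; rewrite h3 /= in hm.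
  have [i Hi] := copy_hit hS cf; move/forallP: hm => /(_ i).
  by rewrite inE in Hi; rewrite Hi.
  have [i Hi] := copy_hit hS cf.
  have fa := copy_in i cf; rewrite inE in fa; case/andP: fa => fd _.
  split => //.
  + have hU : (#|del s :|: copy_set f| <= #|del s| + #|copy_set f|)%N.
      by rewrite cardsU leq_subr.
    have hk := card_copy f; rewrite /= mulnS.
    apply: (leq_trans hU); apply: (leq_trans (leq_add h1 hk)); lia.
  + by rewrite addSn (leq_trans _ (incr _ Hi fd)) // /copy_set imset_f.
  + have := p0; have := p1.
    case: hc => [d0|hlt].
    * rewrite d0 /= => q1 q0.
      have : 0 <= (1-p)*(1 + ecnt s)%:R by apply: mulr_ge0; [lra|exact: ler0n].
      lra.
    * have dpos : (0 < (ecnt s + dcnt s)%:R :> R).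
        rewrite ltr0n lt0n; apply/negP => /eqP E.
        have e0 : ecnt s = 0%N by lia.
        move: hlt; rewrite E e0 mulr0n mul0r; have := p0; lra.
      rewrite ltr_pdivlMr // natrD in hlt.
      rewrite addSn -!natr1 natrD; lra.
- split => //.
  + rewrite cardsU1; move: h1; set a := #|del s| => h1;
    case: (v \notin del s) => /=; lia.
  + have vd : v \notin del s.
      case/imsetP: vC => i _ ->.
      have fa := copy_in i cf; rewrite inE in fa; by case/andP: fa.
    have vU : v \in [set v | u v] by rewrite inE.
    have h := @incr n (del s) [set v] [set v | u v] v (set11 v) vU vd.
    rewrite setUC addnS.
    exact: leq_trans h.
  + rewrite addnS -natr1 natrD; have := p1; have:= p0; rewrite natrD in h4; lra.
Qed.
End Inv2.

Theorem mainTheorem3 (R : realType) (k : nat) (eH : rel 'I_k) (p : R) :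
  (0 < k)%N -> symmetric eH -> irreflexive eH -> 0 <= p -> p < 1 ->
  ALG_competitive eH p (k%:R - p * (k%:R - 1)) (k%:R + p / (1 - p)).
Proof.
move=> k0 _ _ p0 p1.
have k1 : 1 <= k%:R :> R by rewrite ler1n.
exists k%:R; split; first exact: ler0n.
move=> n adj _ _ opt [[S [hS cS]] hmin]; split.
- pose u := fun v : 'I_n => v \in S.
  have eS : [set v | u v] = S by apply/setP => x; rewrite inE.
  exists u; split.
    by rewrite /correct_advice eS; split => // S' h; rewrite cS; apply: hmin.
  move=> s run.
  have hU : hitting eH adj [set v | u v] by rewrite eS.
  have := run_inv (P := invC k p [set v | u v]) _ _ run.
  case.
  + rewrite /invC /= cards0 set0I cards0; split => //; rewrite !mulr0n mulr0 add0r; exact: ler01.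
  + by move=> t s1 s2 st; apply: (step_invC p0 p1 hU st).
  move=> h1 h2 _ h4.
  have hO : (dcnt s + ecnt s <= opt)%N.
    apply: (leq_trans h2); rewrite -cS -eS; apply: subset_leq_card; exact: subsetIr.
  have c1 : (#|del s|%:R <= k%:R * (dcnt s)%:R + (ecnt s)%:R :> R).
    by rewrite -natrM -natrD ler_nat.
  have c2 : ((dcnt s)%:R + (ecnt s)%:R <= opt%:R :> R).
    by rewrite -natrD ler_nat.
  rewrite natrD in h4.
  set D := (dcnt s)%:R in c1 c2 h4 *; set E := (ecnt s)%:R in c1 c2 h4 *.
  set O := opt%:R in c2 *; set K := k%:R in c1 k1 *.
  have A : (K - 1) * D <= (K - 1) * ((1 - p) * (D + E) + 1).
    by apply: ler_wpM2l => //; lra.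
  have B : (K - p * (K - 1)) * (D + E) <= (K - p * (K - 1)) * O.
    apply: ler_wpM2l => //.
    have K0 : 0 <= K - 1 by lra.
    have := mulr_ge0 p0 K0; have := ler_piMl K0 (ltW p1).
    clear; timeout 30 lra.
  clear -A B c1 c2 h4; timeout 30 lra.
- move=> u s run.
  have := run_inv (P := invR k p S) _ _ run.
  case.
  + exists 0%N; rewrite /= cards0 set0I cards0; split => //; rewrite !mulr0n !mulr0 ?add0r; have := p1; lra.
  + by move=> t s1 s2 st; apply: (step_invR p0 p1 hS st).
  move=> c [h1 h2 h3 h4].
  have hO : (c <= opt)%N.
    apply: (leq_trans h2); rewrite -cS; apply: subset_leq_card; exact: subsetIr.
  have c1 : (#|del s|%:R <= k%:R * c%:R + (ecnt s)%:R :> R).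
    by rewrite -natrM -natrD ler_nat.
  have c2 : (c%:R <= opt%:R :> R) by rewrite ler_nat.
  have c3 : ((dcnt s)%:R <= c%:R :> R) by rewrite ler_nat.
  set q := p / (1 - p).
  have q0 : 0 <= q by apply: divr_ge0 => //; lra.
  have qE : (1 - p) * q = p by rewrite /q mulrC mulfVK //; apply/eqP; lra.
  set D := (dcnt s)%:R in c3 h4 *; set E := (ecnt s)%:R in c1 h4 *.
  set C := c%:R in c1 c2 c3 *; set O := opt%:R in c2 *; set K := k%:R in c1 k1 *.
  have hE : E <= q * D + 1.
    rewrite -(ler_pM2l (_ : 0 < 1 - p)); last by lra.
    rewrite mulrDr mulrA qE mulr1; exact: h4.
  have A : q * D <= q * O by apply: ler_wpM2l => //; lra.
  have B : K * C <= K * O by apply: ler_wpM2l => //; lra.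
  clear -A B hE c1 c3 k1; timeout 30 lra.
Qed.
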